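(* Let $V$ be a real sequence and suppose that for some $a>1$, $b>1$, the equation $(-\Delta+V)\psi=0$ has a solution $\psi^-$ with $a^{n^b}\psi^-_n\to1$ as $n\to\infty$. Then: (i) every solution $\psi$ linearly independent of $\psi^-$ increases rapidly as $n\to\infty$, but $a^{-n^b}\psi_n\to0$; (ii) for any solution $\psi$, the product $\psi_n\psi^-_n$ is bounded independently of $n$; (iii) given any boundary condition $c\psi_1+d\psi_2=0$, if $0\notin\mathrm{sp}(-\Delta+V)$, then the Green matrix of $-\Delta+V$ on $n\ge1$ is uniformly bounded.
   Context: $(\Delta f)_n=f_{n+1}+f_{n-1}-2f_n$; $(-\Delta+V)\psi=0$ means $-\psi_{n+1}-\psi_{n-1}+(2+V_n)\psi_n=0$ for $n\ge1$. The Green matrix with the given boundary condition is $G_{mn}=\psi^+_{\min(m,n)}\psi^-_{\max(m,n)}/W$, where $\psi^+$ satisfies the boundary condition and $W=\psi^-_n\psi^+_{n+1}-\psi^-_{n+1}\psi^+_n$. *)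

(* Defs.v *)
From HB Require Import structures.
From mathcomp Require Import all_boot all_order all_algebra.
From mathcomp Require Import all_classical all_reals all_analysis.
Set Implicit Arguments. Unset Strict Implicit. Unset Printing Implicit Defensive.
Import Order.TTheory GRing.Theory Num.Theory.
Import numFieldNormedType.Exports.
Local Open Scope ring_scope.
Local Open Scope classical_set_scope.

(* psi : nat -> R is a solution of (-Delta + V) psi = 0, i.e.
   -psi_{n+1} - psi_{n-1} + (2 + V_n) psi_n = 0 for all n >= 1. *)
Definition is_solution {R : realType} (V psi : nat -> R) : Prop :=
  forall n : nat, (1 <= n)%N ->
    - psi n.+1 - psi n.-1 + (2 + V n) * psi n = 0.

Definition lin_indep {R : realType} (f g : nat -> R) : Prop :=
  forall al be : R, (forall n, al * f n + be * g n = 0) -> al = 0 /\ be = 0.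

(* Wronskian W = psim_n psip_{n+1} - psim_{n+1} psip_n (constant in n for two
   solutions); we evaluate it at n = 1. *)
Definition wronskian {R : realType} (psim psip : nat -> R) (n : nat) : R :=
  psim n * psip n.+1 - psim n.+1 * psip n.

Definition green {R : realType} (psim psip : nat -> R) (m n : nat) : R :=
  psip (minn m n) * psim (maxn m n) / wronskian psim psip 1.

Definition sq_summable {R : realType} (u : nat -> R) : Prop :=
  cvgn (series (fun k => u k.+1 ^+ 2)).

(* 0 is an eigenvalue of -Delta+V on n >= 1 with boundary condition
   c psi_1 + d psi_2 = 0: there is a nonzero square-summable solution
   satisfying the boundary condition. *)
Definition zero_eigenvalue {R : realType} (V : nat -> R) (c d : R) : Prop :=
  exists psi : nat -> R,
    [/\ is_solution V psi, c * psi 1%N + d * psi 2%N = 0,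
        sq_summable psi & exists n, (1 <= n)%N /\ psi n <> 0].

(* Main.v *)
Require Import Defs.
From HB Require Import structures.
From mathcomp Require Import all_boot all_order all_algebra.
From mathcomp Require Import all_classical all_reals all_analysis.
From mathcomp Require Import ring lra zify.
Import Order.TTheory GRing.Theory Num.Theory.
Import numFieldNormedType.Exports.
Local Open Scope ring_scope.
Local Open Scope classical_set_scope.

Lemma archi_nat {R : realType} (x : R) : exists N : nat, x <= N%:R.
Proof. exists (Num.trunc x).+1; exact/ltW/truncnS_gt. Qed.

Lemma evbound (R : realType) (f : nat -> R) (N : nat) (B : R) :
  (forall n, (N <= n)%N -> `|f n| <= B) -> exists M, forall n, `|f n| <= M.
Proof.
move=> HB; exists (B + \sum_(k < N) `|f k|) => n.
have [Nn|nN] := leqP N n.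
  by rewrite ler_wpDr ?HB // sumr_ge0.
have B0 : 0 <= B by apply: le_trans (HB N (leqnn N)).
rewrite (bigD1 (Ordinal nN)) //= ler_wpDl // ler_wpDr // sumr_ge0 //.
Qed.

Lemma pw_split {R : realType} (x b : R) : 0 < x -> x `^ b = x * x `^ (b - 1).
Proof.
move=> x0; transitivity (x `^ 1 * x `^ (b - 1)); last by rewrite powRr1 // ltW.
rewrite -powRD; last by rewrite (gt_eqF x0) implybT.
by congr (_ `^ _); ring.
Qed.

Lemma powR_expR {R : realType} (a y : R) : 0 < a -> a `^ y = expR (y * ln a).
Proof. by move=> a0; rewrite /powR gt_eqF. Qed.

Lemma grow (R : realType) (a b : R) : 1 < a -> 1 < b -> forall M : R,
  exists N, forall n, (N <= n)%N -> M * a `^ (n%:R `^ b) <= a `^ (n.+1%:R `^ b).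
Proof.
move=> a1 b1 M.
have a0 : 0 < a by apply: lt_trans a1.
have la : 0 < ln a by apply: ln_gt0.
have b0 : 0 < b - 1 by rewrite subr_gt0.
set c := (b - 1) * ln a.
have c0 : 0 < c by apply: mulr_gt0.
have [K HK] := archi_nat (expR (M / c) : R).
exists (maxn 1 K) => n; rewrite geq_max => /andP[n1 Kn].
have n0 : (0 : R) < n%:R by rewrite ltr0n.
have lnM : M / c <= ln n%:R.
  rewrite -ler_expR lnK ?posrE //; apply: le_trans HK _; by rewrite ler_nat.
have e1 : n.+1%:R `^ b >= n%:R `^ b + n%:R `^ (b - 1).
  rewrite (@pw_split _ _ b n0) (@pw_split _ _ b (ltr0Sn _ n)) -{2}(mul1r (n%:R `^ (b-1))) -mulrDl.
  rewrite natr1 ler_wpM2l ?ler0n //.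
  by apply: (ge0_ler_powR (ltW b0)); rewrite ?nnegrE ?ler0n ?ler_nat.
have e2 : a `^ (n%:R `^ b) * a `^ (n%:R `^ (b - 1)) <= a `^ (n.+1%:R `^ b).
  rewrite -powRD; last by rewrite (gt_eqF a0) implybT.
  by apply: (ler_powR (ltW a1)); exact: e1.
apply: le_trans e2; rewrite mulrC ler_wpM2l ?powR_ge0 //.
rewrite powR_expR // (@powR_expR _ _ _ n0).
apply: le_trans (expR_ge1Dx _); apply: ler_wpDl => //.
apply: (@le_trans _ _ (((b - 1) * ln n%:R) * ln a)); last first.
  apply: ler_wpM2r; [exact: ltW | apply: le_trans (expR_ge1Dx _); exact: ler_wpDl].
rewrite mulrAC -/c mulrC -ler_pdivrMr //.
Qed.

Lemma g_ge1 {R : realType} (a x : R) : 1 < a -> 0 <= x -> 1 <= a `^ x.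
Proof. by move=> a1 x0; have := ler_powR (ltW a1) x0; rewrite powRr0. Qed.

Lemma ratio (R : realType) (psim : nat -> R) (a b : R) : 1 < a -> 1 < b ->
  (fun n : nat => a `^ (n%:R `^ b) * psim n) @ \oo --> (1 : R) ->
  forall eps : R, 0 < eps -> exists N, forall n, (N <= n)%N ->
   [/\ 0 < psim n, `|psim n.+1| <= eps * `|psim n|
     & 1 <= 2 * (a `^ (n%:R `^ b) * `|psim n|)].
Proof.
move=> a1 b1 hc eps e0.
have e12 : (0:R) < 1/2 by lra.
have [N1 _ HN1] := cvgr_dist_lt _ _ hc _ e12.
have [N2 HN2] := @grow _ a b a1 b1 (3 / eps).
exists (maxn N1 N2) => n; rewrite geq_max => /andP[h1 h2].
have G1 := @g_ge1 _ a (n%:R `^ b) a1 (powR_ge0 _ _).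
have G'1 := @g_ge1 _ a (n.+1%:R `^ b) a1 (powR_ge0 _ _).
have := HN2 n h2.
move: (HN1 n h1) (HN1 n.+1 (leqW h1)) => /=; rewrite !ltr_norml.
set G := a `^ (n%:R `^ b); set G' := a `^ (n.+1%:R `^ b).
set x := psim n; set y := psim n.+1.
move=> /andP[l1 l2] /andP[l3 l4] hg.
have Gx : 1/2 < G * x by lra.
have Gy : 1/2 < G' * y by lra.
have Gp : 0 < G by apply: lt_le_trans G1.
have G'p : 0 < G' by apply: lt_le_trans G'1.
have x0 : 0 < x by rewrite -(pmulr_rgt0 _ Gp); lra.
have y0 : 0 < y by rewrite -(pmulr_rgt0 _ G'p); lra.
rewrite !gtr0_norm //; split => //; last by lra.
have h3 : 3 / eps * G * y <= G' * y by rewrite ler_wpM2r // ltW.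
have h4 : G * y < eps / 2.
  have : 3 / eps * G * y < 3 / 2 by lra.
  rewrite -mulrA mulrAC ltr_pdivrMr // => h; lra.
have h5 : G * y <= G * (eps * x) by nra.
by rewrite -(ler_pM2l Gp).
Qed.

Lemma sol_step {R : realType} {V f : nat -> R} : is_solution V f ->
  forall n, f n.+2 = (2 + V n.+1) * f n.+1 - f n.
Proof.
move=> hf n; have := hf n.+1 isT => /= e.
by rewrite -[LHS]addr0 -e; ring.
Qed.

Lemma wr_const {R : realType} {V f g : nat -> R} : is_solution V f -> is_solution V g ->
  forall n, wronskian f g n = wronskian f g 0.
Proof.
move=> hf hg; elim=> [//|n <-].
by rewrite /wronskian (sol_step hf) (sol_step hg); ring.
Qed.

Lemma pbound {R : realType} {V psim psi : nat -> R} {N : nat} :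
  is_solution V psim -> is_solution V psi ->
  (forall n, (N <= n)%N -> 0 < psim n /\ `|psim n.+1| <= 1/2 * `|psim n|) ->
  exists M, forall n, `|psi n * psim n| <= M.
Proof.
move=> hm hp HN.
set W := wronskian psim psi 0.
have hW n : psim n * psi n.+1 - psim n.+1 * psi n = W.
  by rewrite /W -(wr_const hm hp n).
set B := `|psi N * psim N| + `|W|.
apply: (@evbound _ _ N B) => n /subnK <-.
elim: (n - N)%N => [|k IH]; first by rewrite add0n ler_wpDr.
rewrite addSn.
have [x0 hy] := HN (k + N)%N (leq_addl _ _).
set x := psim (k + N)%N in x0 hy IH *; set y := psim (k + N).+1 in hy *.
set s := psi (k + N)%N in IH *; set t := psi (k + N).+1.
have e : x * t = W + y * s by rewrite /x /y /s /t -(hW (k+N)%N); ring.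
have ht : x * `|t| <= `|W| + `|y| * `|s|.
  by rewrite -(gtr0_norm x0) -!normrM e ler_normD.
have Wb : `|W| <= B by rewrite ler_wpDl.
rewrite normrM (gtr0_norm x0) in IH.
rewrite normrM.
have h1 : 0 <= `|t| * (1/2 * x - `|y|) by rewrite mulr_ge0 // subr_ge0 -(gtr0_norm x0).
have h2 : 0 <= `|s| * (1/2 * x - `|y|) by rewrite mulr_ge0 // subr_ge0 -(gtr0_norm x0).
have B0 : 0 <= B by rewrite addr_ge0.
nra.
Qed.

Lemma mono_psim {R : realType} {psim : nat -> R} {N : nat} :
  (forall n, (N <= n)%N -> 0 < psim n /\ `|psim n.+1| <= 1/2 * `|psim n|) ->
  forall m n, (N <= m)%N -> (m <= n)%N -> `|psim n| <= `|psim m|.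
Proof.
move=> HN m n Nm /subnK <-; elim: (n - m)%N => [|k IH]; first by rewrite add0n.
rewrite addSn; apply: le_trans IH.
have [_ h] := HN (k + m)%N (leq_trans Nm (leq_addl _ _)).
apply: le_trans h _.
have := normr_ge0 (psim (k + m)%N); lra.
Qed.

Lemma init_bound {R : realType} (f : nat -> R) (N : nat) :
  forall n, (n < N)%N -> `|f n| <= \sum_(k < N) `|f k|.
Proof.
move=> n nN; rewrite (bigD1 (Ordinal nN)) //= ler_wpDr // sumr_ge0 //.
Qed.

Lemma green_bound {R : realType} {V psim psip : nat -> R} {N : nat} :
  is_solution V psim -> is_solution V psip ->
  (forall n, (N <= n)%N -> 0 < psim n /\ `|psim n.+1| <= 1/2 * `|psim n|) ->
  exists M, forall m n, `|green psim psip m n| <= M.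
Proof.
move=> hm hp HN.
have [P HP] := pbound hm hp HN.
have [Bm HBm] := @evbound _ psim N `|psim N| (fun n hn => mono_psim HN N n (leqnn N) hn).
set Bp := \sum_(k < N) `|psip k|.
have P0 : 0 <= P by apply: le_trans (HP 0%N).
have Bm0 : 0 <= Bm by apply: le_trans (HBm 0%N).
have Bp0 : 0 <= Bp by rewrite sumr_ge0.
set K := P + Bp * Bm.
have key m n : (m <= n)%N -> `|psip m * psim n| <= K.
  move=> mn; rewrite normrM; have [Nm|mN] := leqP N m.
    apply: (@le_trans _ _ P); last by rewrite ler_wpDr // mulr_ge0.
    apply: le_trans (HP m); rewrite normrM ler_wpM2l //.
    exact: mono_psim HN m n Nm mn.
  apply: (@le_trans _ _ (Bp * Bm)); last by rewrite ler_wpDl.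
  by apply: ler_pM => //; first exact: init_bound.
exists (K * `|(wronskian psim psip 1)^-1|) => m n.
rewrite /green normrM ler_wpM2r //.
have [mn|nm] := leqP m n.
  exact: key.
exact: key (ltnW nm).
Qed.

Lemma Wnz {R : realType} {V psim psi : nat -> R} {N : nat} :
  is_solution V psim -> is_solution V psi -> lin_indep psi psim ->
  (forall n, (N <= n)%N -> 0 < psim n) -> wronskian psim psi 0 != 0.
Proof.
move=> hm hp hli hpos; apply/eqP => W0.
have hW n : psim n * psi n.+1 = psim n.+1 * psi n.
  apply/eqP; rewrite -subr_eq0; apply/eqP.
  by rewrite -W0 -(wr_const hm hp n).
set C := psi N / psim N.
have fwd k : psi (k + N)%N = C * psim (k + N)%N.
  elim: k => [|k IH]; first by rewrite add0n /C divfK // lt0r_neq0 // hpos.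
  have p0 := hpos (k + N)%N (leq_addl _ _).
  rewrite addSn; apply: (mulfI (lt0r_neq0 p0)).
  by rewrite hW IH; ring.
have bwd k : forall n, (N <= n + k)%N -> psi n = C * psim n.
  elim: k => [|k IH] n hn.
    by rewrite addn0 in hn; rewrite -(subnK hn) fwd.
  have e1 := IH n.+1 (ltac:(lia)).
  have e2 := IH n.+2 (ltac:(lia)).
  have em := sol_step hm n; have ep := sol_step hp n.
  rewrite e1 e2 em in ep.
  have -> : psi n = (2 + V n.+1) * (C * psim n.+1)
      - C * ((2 + V n.+1) * psim n.+1 - psim n) by rewrite ep; ring.
  ring.
have [] := hli 1 (- C).
  by move=> n; rewrite (bwd N n (leq_addl _ _)); ring.
by move=> /eqP; rewrite oner_eq0.
Qed.

Lemma core_i {R : realType} (V psim psi : nat -> R) (a b : R) :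
  1 < a -> 1 < b -> is_solution V psim ->
  (fun n : nat => a `^ (n%:R `^ b) * psim n) @ \oo --> (1 : R) ->
  is_solution V psi -> lin_indep psi psim ->
  exists w : R, 0 < w /\ forall eps : R, 0 < eps -> exists N, forall n, (N <= n)%N ->
   [/\ 0 < psim n, psim n.+1 <= eps * psim n,
       1 <= 2 * (a `^ (n%:R `^ b) * psim n),
       w / 2 <= psim n * `|psi n.+1| & psim n * `|psi n.+1| <= 3 / 2 * w].
Proof.
move=> a1 b1 hm hc hp hli.
set W := wronskian psim psi 0.
have hW n : psim n * psi n.+1 = W + psim n.+1 * psi n.
  by rewrite /W -(wr_const hm hp n) /wronskian; ring.
have h12 : (0 : R) < 1 / 2 by lra.
have [N0 HN0] := @ratio _ psim a b a1 b1 hc _ h12.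
have hpos n : (N0 <= n)%N -> 0 < psim n by move=> /HN0 [].
have Wn0 : W != 0 := Wnz hm hp hli hpos.
have [P HP] : exists P, forall n, `|psi n * psim n| <= P.
  apply: (pbound hm hp (N := N0)) => n /HN0 [h1 h2 _]; split => //.
set w := `|W|.
have w0 : 0 < w by rewrite normr_gt0.
have P0 : 0 <= P by apply: le_trans (HP 0%N).
exists w; split => // eps e0.
set d := w / (2 * (P + 1)).
have d0 : 0 < d by rewrite divr_gt0 // mulr_gt0 // ltr_wpDl.
set e' := Order.min eps d.
have e'0 : 0 < e' by rewrite lt_min e0 d0.
have [h1 h2] : e' <= eps /\ e' <= d by have := le_refl e'; rewrite {2}/e' le_min => /andP.
have [N HN] := @ratio _ psim a b a1 b1 hc _ e'0.
exists N => n hn; have [p0 r g1] := HN n hn; have [p1 _ _] := HN n.+1 (leqW hn).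
rewrite !gtr0_norm // in r g1.
have hy : psim n.+1 * `|psi n| <= w / 2.
  apply: (@le_trans _ _ (e' * (psim n * `|psi n|))).
    by rewrite mulrA ler_wpM2r.
  have hP : psim n * `|psi n| <= P by rewrite -(gtr0_norm p0) -normrM mulrC.
  apply: (@le_trans _ _ (d * P)).
    apply: ler_pM => //; [exact: ltW | by rewrite mulr_ge0 // ltW].
  rewrite /d mulrAC ler_pdivrMr; last by rewrite mulr_gt0 // ltr_wpDl.
  nra.
have t1 : w <= psim n * `|psi n.+1| + psim n.+1 * `|psi n|.
  have -> : w = `|psim n * psi n.+1 - psim n.+1 * psi n| by rewrite hW; congr `|_|; ring.
  by apply: le_trans (ler_normB _ _) _; rewrite !normrM (gtr0_norm p0) (gtr0_norm p1).
have t2 : psim n * `|psi n.+1| <= w + psim n.+1 * `|psi n|.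
  by rewrite -(gtr0_norm p0) -(gtr0_norm p1) -!normrM hW ler_normD.
split => //; try lra.
by apply: le_trans r _; rewrite ler_wpM2r // ltW.
Qed.

Lemma part_i {R : realType} (V psim psi : nat -> R) (a b : R) :
  1 < a -> 1 < b -> is_solution V psim ->
  (fun n : nat => a `^ (n%:R `^ b) * psim n) @ \oo --> (1 : R) ->
  is_solution V psi -> lin_indep psi psim ->
     [/\ (\forall n \near \oo, `|psi n| < `|psi n.+1|),
         (forall r : R, 0 < r -> (fun n : nat => `|psi n| / r ^+ n) @ \oo --> +oo)
       & (fun n : nat => psi n / a `^ (n%:R `^ b)) @ \oo --> (0 : R)].
Proof.
move=> a1 b1 hm hc hp hli.
have [w [w0 core]] := @core_i _ V psim psi a b a1 b1 hm hc hp hli.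
split.
- have [N HN] := core (1 / 8) ltac:(lra).
  exists N.+1 => // -[//|n] /= hn.
  have [p0 r _ l1 u1] := HN n hn; have [p1 _ _ l2 u2] := HN n.+1 (leqW hn).
  have h : 0 <= `|psi n.+2| * (psim n - 8 * psim n.+1).
    by rewrite mulr_ge0 // subr_ge0; lra.
  rewrite -(ltr_pM2l p0); nra.
- move=> r r0; apply/cvgryPge => A.
  have r2' : 0 < 2 * r by rewrite mulr_gt0.
  have r2 : 0 < 1 / (2 * r) by rewrite divr_gt0.
  have [N HN] := core (1 / (2 * r)) r2.
  have dec k : psim (k + N)%N * (2 * r) ^+ k <= psim N.
    elim: k => [|k IH]; first by rewrite add0n expr0 mulr1.
    have [p0 rr _ _ _] := HN (k + N)%N (leq_addl _ _).
    rewrite addSn exprS; apply: le_trans IH.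
    have h : psim (k + N).+1 * (2 * r) <= psim (k + N)%N.
      have := ler_wpM2l (ltW r2') rr.
      have e : 2 * r * (1 / (2 * r)) = 1 by field; rewrite gt_eqF.
      by move=> h; rewrite mulrC; apply: le_trans h _; rewrite mulrA e mul1r.
    by rewrite mulrA ler_wpM2r // exprn_ge0 // ltW.
  have [x0 _ _ _ _] := HN N (leqnn N).
  set x := psim N in x0 dec.
  set Q := r ^+ N.+1.
  have Q0 : 0 < Q by rewrite exprn_gt0.
  set c := w / (2 * x * Q).
  have c0 : 0 < c by rewrite divr_gt0 // !mulr_gt0.
  have [K HK] := archi_nat (A / c).
  exists (K + N).+1 => // -[//|m] /= hmK.
  have Nm : (N <= m)%N by move: hmK; lia.
  rewrite -(subnK Nm); set k := (m - N)%N.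
  have Kk : (K <= k)%N by rewrite /k; move: hmK; lia.
  have [p0 _ _ l1 _] := HN (k + N)%N (leq_addl _ _).
  have hd := dec k.
  set X := `|psi (k + N).+1|.
  set T : R := 2 ^+ k; set q := r ^+ k.
  have hX : w / 2 * (T * q) <= x * X.
    rewrite /T /q -exprMn.
    apply: le_trans (ler_wpM2r (exprn_ge0 _ (ltW r2')) l1) _.
    by rewrite mulrAC; apply: ler_wpM2r.
  rewrite ler_pdivlMr ?exprn_gt0 //.
  have -> : r ^+ (k + N).+1 = q * Q by rewrite -exprD addnS.
  have hk : (k%:R : R) <= T by rewrite /T -natrX ler_nat ltnW // ltn_expl.
  have hA : A <= c * T.
    rewrite mulrC -ler_pdivrMr //; apply: le_trans HK _.
    by apply: le_trans hk; rewrite ler_nat.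
  have q0 : 0 < q by rewrite exprn_gt0.
  apply: (@le_trans _ _ (c * T * (q * Q))).
    by rewrite ler_wpM2r // ltW // mulr_gt0.
  have -> : c * T * (q * Q) = w / 2 * (T * q) / x.
    by rewrite /c; field; rewrite !gt_eqF.
  by rewrite ler_pdivrMr // [X * _]mulrC.
- apply/cvgrPdist_le => e e0.
  set k := e / (3 * w).
  have k0 : 0 < k by rewrite divr_gt0 // mulr_gt0.
  have hk : k * (3 * w) = e by rewrite /k divfK // gt_eqF // mulr_gt0.
  have [N HN] := core k k0.
  exists N.+1 => // -[//|n] /= hn.
  have [p0 r _ _ u1] := HN n hn; have [p1 _ g1 _ _] := HN n.+1 (leqW hn).
  have G1 := @g_ge1 _ a (n.+1%:R `^ b) a1 (powR_ge0 _ _).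
  set G := a `^ (n.+1%:R `^ b) in G1 g1 *.
  have Gp : 0 < G by apply: lt_le_trans G1.
  rewrite sub0r normrN normrM (@gtr0_norm _ G^-1); last by rewrite invr_gt0.
  rewrite ler_pdivrMr //.
  set s := `|psi n.+1|.
  have s0 : 0 <= s := normr_ge0 _.
  have q1 : 0 <= s * (2 * (G * psim n.+1) - 1) by rewrite mulr_ge0 // subr_ge0.
  have c1 : 0 <= 2 * G * k by apply: mulr_ge0; [apply: mulr_ge0 => //; exact: ltW | exact: ltW].
  have c2 : 0 <= 2 * G * s by apply: mulr_ge0 => //; apply: mulr_ge0 => //; exact: ltW.
  have q2 : 0 <= (2 * G * s) * (k * psim n - psim n.+1).
    by apply: mulr_ge0 => //; rewrite subr_ge0.
  have q3 : 0 <= (2 * G * k) * (3 / 2 * w - psim n * s).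
    by apply: mulr_ge0 => //; rewrite subr_ge0.
  nra.
Qed.

Theorem corollary3 (R : realType) (V psim : nat -> R) (a b : R) :
  1 < a -> 1 < b ->
  is_solution V psim ->
  (fun n : nat => a `^ (n%:R `^ b) * psim n) @ \oo --> (1 : R) ->
  (* (i) *)
  (forall psi : nat -> R, is_solution V psi -> lin_indep psi psim ->
     [/\ (\forall n \near \oo, `|psi n| < `|psi n.+1|),
         (forall r : R, 0 < r -> (fun n : nat => `|psi n| / r ^+ n) @ \oo --> +oo)
       & (fun n : nat => psi n / a `^ (n%:R `^ b)) @ \oo --> (0 : R)]) /\
  (* (ii) *)
  (forall psi : nat -> R, is_solution V psi ->
     exists M : R, forall n : nat, `|psi n * psim n| <= M) /\
  (* (iii) *)
  (forall c d : R, (c, d) != (0, 0) -> ~ zero_eigenvalue V c d ->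
     forall psip : nat -> R, is_solution V psip ->
       c * psip 1%N + d * psip 2%N = 0 ->
       (exists n, psip n <> 0) ->
       exists M : R, forall m n : nat, (1 <= m)%N -> (1 <= n)%N ->
         `|green psim psip m n| <= M).
Proof.
move=> a1 b1 hm hc.
have h12 : (0 : R) < 1 / 2 by lra.
have [N HN] := @ratio _ psim a b a1 b1 hc _ h12.
have HN' : forall n, (N <= n)%N -> 0 < psim n /\ `|psim n.+1| <= 1/2 * `|psim n|.
  by move=> n /HN [].
split; [|split].
- by move=> psi hp hli; exact: (@part_i _ V psim psi a b a1 b1 hm hc hp hli).
- by move=> psi hp; exact: pbound hm hp HN'.
- move=> c d _ _ psip hp _ _.
  have [M HM] := green_bound hm hp HN'.
  by exists M => m n _ _; exact: HM.
Qed.
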